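(* Let $I$ be a monomial ideal of $R=K[x_1,\ldots,x_d]$ ($K$ a field), and write its Newton polyhedron as $NP(I)=\{\mathbf{x}\in\mathbb{R}^d_+\mid \mathbf{a}_i\cdot\mathbf{x}\ge c_i \text{ for } 1\le i\le s\}$ with $\mathbf{a}_i\in\mathbb{N}^d$, $c_i\in\mathbb{N}$, $\gcd(\mathbf{a}_{i1},\ldots,\mathbf{a}_{id},c_i)=1$, where for each $i$ the set $F_i=\{\mathbf{x}\in NP(I)\mid \mathbf{a}_i\cdot\mathbf{x}=c_i\}$ is a facet of $NP(I)$, and $F_1,\ldots,F_s$ are the facets of $NP(I)$. For $r\in\mathbb{R}_+$ the following are equivalent: (1) $r$ is a jumping number for $I$; (2) for some $1\le i\le s$ with $c_i\neq0$ there exists a lattice point $\mathbf{p}\in r\cdot F_i\cap\mathbb{N}^d$; (3) for some $1\le i\le s$ with $c_i\neq0$ there exists $\mathbf{x}\in\mathbb{N}^d$ with $\mathbf{a}_i\cdot\mathbf{x}=rc_i$ and $\mathbf{a}_j\cdot\mathbf{x}\ge rc_j$ for all $1\le j\le s$, $j\neq i$.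
   Context: $\mathbb{R}_+$ denotes the non-negative reals, $\mathbb{N}$ the non-negative integers, and $\mathbf{x}^{\mathbf{a}}=x_1^{a_1}\cdots x_d^{a_d}$. $NP(I)$ is the convex hull in $\mathbb{R}^d$ of $\{\mathbf{a}\in\mathbb{N}^d\mid \mathbf{x}^{\mathbf{a}}\in I\}$ (a lattice polyhedron). Scaling means $r\cdot NP(I)=\{\mathbf{x}\in\mathbb{R}^d_+\mid \mathbf{a}_i\cdot\mathbf{x}\ge rc_i,\ 1\le i\le s\}$ and $r\cdot F_i=\{\mathbf{x}\in r\cdot NP(I)\mid \mathbf{a}_i\cdot\mathbf{x}=rc_i\}$. For real $t\ge0$, the $t$-th real power is $\overline{I^t}=(\{\mathbf{x}^{\mathbf{a}}\mid \mathbf{a}\in t\cdot NP(I)\cap\mathbb{N}^d\})$, and $\overline{I^{>r}}=\bigcup_{t>r}\overline{I^t}$. A jumping number for $I$ is a real $r\ge0$ with $\overline{I^r}\neq\overline{I^{>r}}$. *)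

(* Defs.v *)
From HB Require Import structures.
From mathcomp Require Import all_boot all_order all_algebra.
From mathcomp Require Import reals.
From mathcomp Require Import mpoly.

Set Implicit Arguments.
Unset Strict Implicit.
Unset Printing Implicit Defensive.

Import Order.TTheory GRing.Theory Num.Theory.
Local Open Scope ring_scope.

Definition is_ideal (K : fieldType) (d : nat) (J : {mpoly K[d]} -> Prop) :=
  [/\ J 0,
      (forall p q, J p -> J q -> J (p + q)) &
      (forall p q, J q -> J (p * q))].

Definition ideal_gen (K : fieldType) (d : nat) (G : {mpoly K[d]} -> Prop)
  (p : {mpoly K[d]}) : Prop :=
  forall J, is_ideal J -> (forall g, G g -> J g) -> J p.

Definition monomial_ideal (K : fieldType) (d : nat) (I : {mpoly K[d]} -> Prop) :=
  is_ideal I /\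
  exists A : 'X_{1..d} -> Prop,
    forall p, I p <-> ideal_gen (fun q => exists2 m, A m & q = 'X_[m]) p.

Definition dotr (R : realType) (d : nat) (u x : 'I_d -> R) : R :=
  \sum_(j < d) u j * x j.

Definition exp_vec (R : realType) (d : nat) (m : 'X_{1..d}) : 'I_d -> R :=
  fun j => (m j)%:R.
Arguments exp_vec R {d} m.

Definition conv_hull (R : realType) (d : nat) (S : ('I_d -> R) -> Prop)
  (x : 'I_d -> R) : Prop :=
  exists n (pts : 'I_n -> 'I_d -> R) (lam : 'I_n -> R),
    [/\ (forall k, S (pts k)), (forall k, 0 <= lam k), \sum_(k < n) lam k = 1 &
        forall j, x j = \sum_(k < n) lam k * pts k j].

Definition NP (R : realType) (K : fieldType) (d : nat) (I : {mpoly K[d]} -> Prop) :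
  ('I_d -> R) -> Prop :=
  conv_hull (fun v => exists2 m : 'X_{1..d}, I 'X_[m] & v = exp_vec R m).
Arguments NP R {K d} I.

Definition dilate (R : realType) (d : nat) (t : R) (P : ('I_d -> R) -> Prop)
  (x : 'I_d -> R) : Prop :=
  exists2 y, P y & forall j, x j = t * y j.

Definition aff_indep (R : realType) (d n : nat) (pts : 'I_n.+1 -> 'I_d -> R) :=
  forall lam : 'I_n -> R,
    (forall j, \sum_(i < n) lam i * (pts (lift ord0 i) j - pts ord0 j) = 0) ->
    forall i, lam i = 0.

Definition dim_ge (R : realType) (d : nat) (S : ('I_d -> R) -> Prop) (k : nat) :=
  exists2 pts : 'I_k.+1 -> 'I_d -> R, (forall i, S (pts i)) & aff_indep pts.

Definition aff_dim (R : realType) (d : nat) (S : ('I_d -> R) -> Prop) (k : nat) :=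
  dim_ge S k /\ ~ dim_ge S k.+1.

Definition is_face (R : realType) (d : nat) (P F : ('I_d -> R) -> Prop) :=
  exists (al : 'I_d -> R) (be : R),
    (forall x, P x -> be <= dotr al x) /\
    (forall x, F x <-> P x /\ dotr al x = be).

Definition is_facet (R : realType) (d : nat) (P F : ('I_d -> R) -> Prop) :=
  is_face P F /\ exists k, aff_dim P k.+1 /\ aff_dim F k.

Definition real_pow (R : realType) (K : fieldType) (d : nat)
  (I : {mpoly K[d]} -> Prop) (t : R) : {mpoly K[d]} -> Prop :=
  ideal_gen (fun q => exists2 m : 'X_{1..d},
                 dilate t (NP R I) (exp_vec R m) & q = 'X_[m]).

Definition real_pow_gt (R : realType) (K : fieldType) (d : nat)
  (I : {mpoly K[d]} -> Prop) (r : R) : {mpoly K[d]} -> Prop :=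
  fun p => exists2 t : R, r < t & real_pow I t p.

Definition jumping_number (R : realType) (K : fieldType) (d : nat)
  (I : {mpoly K[d]} -> Prop) (r : R) : Prop :=
  0 <= r /\ ~ (forall p, real_pow I r p <-> real_pow_gt I r p).

(* NP(I) = {x in R^d_+ | a_i . x >= c_i}, as in the paper:             *)
(*   r . NP(I) = {x in R^d_+ | a_i . x >= r c_i, 1 <= i <= s}          *)
(*   r . F_i   = {x in r . NP(I) | a_i . x = r c_i}                    *)

Definition nat_vec (R : realType) (d : nat) (v : 'I_d -> nat) : 'I_d -> R :=
  fun j => (v j)%:R.
Arguments nat_vec R {d} v.

Definition scaled_NP (R : realType) (d s : nat) (a : 'I_s -> 'I_d -> nat)
  (c : 'I_s -> nat) (r : R) (x : 'I_d -> R) : Prop :=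
  (forall j, 0 <= x j) /\ (forall k, r * (c k)%:R <= dotr (nat_vec R (a k)) x).

Definition scaled_facet (R : realType) (d s : nat) (a : 'I_s -> 'I_d -> nat)
  (c : 'I_s -> nat) (r : R) (i : 'I_s) (x : 'I_d -> R) : Prop :=
  scaled_NP a c r x /\ dotr (nat_vec R (a i)) x = r * (c i)%:R.

(* Main.v *)
Require Import Defs.
From HB Require Import structures.
From mathcomp Require Import all_boot all_order all_algebra.
From mathcomp Require Import reals.
From mathcomp Require Import mpoly.
From mathcomp Require Import lra.
From Stdlib Require Import Classical FunctionalExtensionality.

Set Implicit Arguments.
Unset Strict Implicit.
Unset Printing Implicit Defensive.
Import Order.TTheory GRing.Theory Num.Theory.
Local Open Scope ring_scope.

Lemma dotr_scale (R : realType) d (u x : 'I_d -> R) t :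
  dotr u (fun j => t * x j) = t * dotr u x.
Proof. rewrite /dotr mulr_sumr; apply: eq_bigr => j _; by rewrite mulrCA. Qed.

Lemma dotr_ge0 (R : realType) d (u x : 'I_d -> R) :
  (forall j, 0 <= u j) -> (forall j, 0 <= x j) -> 0 <= dotr u x.
Proof. move=> hu hx; rewrite /dotr; apply: sumr_ge0 => j _; exact: mulr_ge0. Qed.

Lemma dotr_le (R : realType) d (u x y : 'I_d -> R) :
  (forall j, 0 <= u j) -> (forall j, x j <= y j) -> dotr u x <= dotr u y.
Proof. move=> hu hx; rewrite /dotr; apply: ler_sum => j _; exact: ler_wpM2l. Qed.

Lemma ideal_gen_ideal (K : fieldType) d (G : {mpoly K[d]} -> Prop) :
  is_ideal (ideal_gen G).
Proof.
split.
- by move=> J [h0 _ _] _.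
- by move=> p q hp hq J hJ hG; case: (hJ) => _ hD _; apply: hD; [apply: hp|apply: hq].
- by move=> p q hq J hJ hG; case: (hJ) => _ _ hM; apply: hM; apply: hq.
Qed.

Lemma ideal_gen_in (K : fieldType) d (G : {mpoly K[d]} -> Prop) g :
  G g -> ideal_gen G g.
Proof. by move=> hg J _ hG; apply: hG. Qed.

Lemma exists_t (R : realType) (T : eqType) (l : seq T) (C D : T -> R) (r : R) :
  (forall k, 0 <= D k) ->
  (forall k, k \in l -> C k = 0 \/ (0 < C k /\ r * C k < D k)) ->
  exists t, r < t /\ forall k, k \in l -> t * C k <= D k.
Proof.
move=> hD; elim: l => [|k l IH] hl.
  exists (r + 1); split; [lra| by []].
have [t [hrt ht]] : exists t, r < t /\ forall k, k \in l -> t * C k <= D k.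
  by apply: IH => k' hk'; apply: hl; rewrite inE hk' orbT.
have := hl k; rewrite inE eqxx => /(_ isT) [hC0|[hCp hCr]].
  exists t; split => // k'; rewrite inE => /orP [/eqP ->|hk']; last exact: ht.
  by rewrite hC0 mulr0.
exists (Num.min t (D k / C k)); split.
  by rewrite lt_min hrt /= ltr_pdivlMr.
move=> k'; rewrite inE => /orP [/eqP ->|hk'].
  have h1 : Num.min t (D k / C k) <= D k / C k by rewrite ge_min lexx orbT.
  rewrite -ler_pdivlMr //; exact: h1.
have hC' : 0 <= C k'.
  by have := hl k'; rewrite inE hk' orbT => /(_ isT) [->|[/ltW ? _]].
apply: le_trans (ht _ hk'); apply: ler_wpM2r => //.
by rewrite ge_min lexx.
Qed.

Theorem proposition5p8 (R : realType) (K : fieldType) (d : nat)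
  (I : {mpoly K[d]} -> Prop) (s : nat)
  (a : 'I_s -> 'I_d -> nat) (c : 'I_s -> nat)
  (hI : monomial_ideal I)
  (hNP : forall x : 'I_d -> R, NP R I x <->
          ((forall j, 0 <= x j) /\
           (forall i, (c i)%:R <= dotr (nat_vec R (a i)) x)))
  (hgcd : forall i, gcdn (\big[gcdn/0%N]_(j < d) a i j) (c i) = 1%N)
  (hfacet : forall i, is_facet (NP R I)
              (fun x => NP R I x /\ dotr (nat_vec R (a i)) x = (c i)%:R))
  (hall : forall F, is_facet (NP R I) F ->
            exists i, forall x, F x <->
              (NP R I x /\ dotr (nat_vec R (a i)) x = (c i)%:R))
  (r : R) (hr : 0 <= r) :
  [<-> jumping_number I r;
       exists i, (c i != 0%N) /\
         exists p : 'I_d -> nat, scaled_facet a c r i (nat_vec R p);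
       exists i, (c i != 0%N) /\
         exists p : 'I_d -> nat,
           dotr (nat_vec R (a i)) (nat_vec R p) = r * (c i)%:R /\
           forall k, k != i ->
             r * (c k)%:R <= dotr (nat_vec R (a k)) (nat_vec R p)].
Proof.
have nv0 : forall (v : 'I_d -> nat) j, 0 <= nat_vec R v j.
  by move=> v j; rewrite /nat_vec ler0n.
have nvs0 : forall k j, 0 <= nat_vec R (a k) j by move=> k j; exact: nv0.
have NPne : exists y, NP R I y.
  case: (classic (exists i : 'I_s, True)) => [[i _]|hn].
    have [_ [k [[[pts hpts _] _] _]]] := hfacet i.
    by exists (pts ord0).
  exists (fun _ => 0); apply/hNP; split => // i; exfalso; apply: hn; by exists i.
have dil_sc : forall t x, 0 <= t -> dilate t (NP R I) x -> scaled_NP a c t x.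
  move=> t x ht [y /hNP [hy0 hyc] hxy].
  have -> : x = (fun j => t * y j) by apply: functional_extensionality.
  split; first by move=> j; exact: mulr_ge0.
  by move=> k; rewrite dotr_scale; apply: ler_wpM2l.
have sc_dil : forall t x, 0 < t -> scaled_NP a c t x -> dilate t (NP R I) x.
  move=> t x ht [hx0 hxc]; exists (fun j => x j / t).
    apply/hNP; split; first by move=> j; apply: divr_ge0 => //; exact: ltW.
    move=> k; have -> : (fun j => x j / t) = (fun j => t^-1 * x j).
      by apply: functional_extensionality => j; rewrite mulrC.
    rewrite dotr_scale -(ler_pM2l ht) mulrA mulrV ?unitfE ?gt_eqF // mul1r.
    exact: hxc.
  by move=> j; rewrite mulrC divfK // gt_eqF.
have up : forall t (b m : 'I_d -> nat), (forall j, b j <= m j)%N ->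
    scaled_NP a c t (nat_vec R b) -> scaled_NP a c t (nat_vec R m).
  move=> t b m hbm [_ hb]; split => // k.
  apply: le_trans (hb k) _; apply: dotr_le => // j.
  by rewrite /nat_vec ler_nat.
have gen0 : real_pow I (0 : R) 1.
  move=> J0 hJ0 hG; apply: hG; exists 0%MM; last by rewrite mpolyX0.
  have [y hy] := NPne; exists y => // j.
  by rewrite /exp_vec mnm0E mul0r.
have mono : forall t t' : R, 0 <= t' -> t' <= t ->
    forall p, real_pow I t p -> real_pow I t' p.
  move=> t t' ht' htt p hp; apply: (hp (real_pow I t')); first exact: ideal_gen_ideal.
  move=> g [m hm ->].
  have [->|ht'0] := eqVneq t' 0.
    have [_ _ hM] := @ideal_gen_ideal K d (fun q => exists2 m : 'X_{1..d},
                 dilate (0:R) (NP R I) (exp_vec R m) & q = 'X_[m]).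
    by rewrite -(mulr1 'X_[m]); apply: hM; exact: gen0.
  move=> J0 hJ0 hG; apply: hG; exists m => //; apply: sc_dil.
    by rewrite lt_neqAle eq_sym ht'0.
  have [h0 hc] := dil_sc _ _ (le_trans ht' htt) hm; split => // k.
  apply: le_trans (hc k); apply: ler_wpM2r => //; by rewrite ler0n.
have gt_ideal : is_ideal (real_pow_gt I r).
  split.
  - exists (r + 1); first lra.
    have [h0 _ _] := @ideal_gen_ideal K d (fun q => exists2 m : 'X_{1..d},
                 dilate (r+1) (NP R I) (exp_vec R m) & q = 'X_[m]).
    exact: h0.
  - move=> p q [t1 h1 hp] [t2 h2 hq]; exists (Num.min t1 t2).
      by rewrite lt_min h1 h2.
    have hm0 : 0 <= Num.min t1 t2 by rewrite le_min; apply/andP; split; lra.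
    have [_ hD _] := @ideal_gen_ideal K d (fun q => exists2 m : 'X_{1..d},
       dilate (Num.min t1 t2) (NP R I) (exp_vec R m) & q = 'X_[m]).
    apply: hD.
      by apply: (mono t1) => //; rewrite ge_min lexx.
    by apply: (mono t2) => //; rewrite ge_min lexx orbT.
  - move=> p q [t h hq]; exists t => //.
    have [_ _ hM] := @ideal_gen_ideal K d (fun q => exists2 m : 'X_{1..d},
       dilate t (NP R I) (exp_vec R m) & q = 'X_[m]).
    exact: hM.
tfae.
-
  move=> [_ hj]; apply: NNPP => hn; apply: hj.
  have key : forall m : 'X_{1..d}, dilate r (NP R I) (exp_vec R m) ->
      exists2 t, r < t & scaled_NP a c t (exp_vec R m).
    move=> m hm; have [_ hsc] := dil_sc _ _ hr hm.
    have [t [hrt ht]] : exists t, r < t /\ forall k, k \in enum 'I_s ->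
        t * (c k)%:R <= dotr (nat_vec R (a k)) (exp_vec R m).
      apply: (@exists_t R _ (enum 'I_s) (fun k => (c k)%:R)
       (fun k => dotr (nat_vec R (a k)) (exp_vec R m)) r).
        by move=> k; apply: dotr_ge0 => // j; exact: (nv0 (fun j => m j)).
      move=> k _; have [->|hck] := eqVneq (c k) 0%N; first by left.
      right; split; first by rewrite ltr0n lt0n.
      rewrite lt_neqAle hsc andbT; apply/eqP => he; apply: hn.
      exists k; split => //; exists (fun j => m j).
      split; last exact: esym he.
      by split; [move=> j; exact: (nv0 (fun j => m j))|exact: hsc].
    exists t => //; split; first by move=> j; exact: (nv0 (fun j => m j)).
    by move=> k; apply: ht; rewrite mem_enum.
  move=> p; split.
    move=> hp; apply: (hp (real_pow_gt I r)); first exact: gt_ideal.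
    move=> g [m hm ->]; have [t hrt ht] := key m hm.
    exists t => //; move=> J0 hJ0 hG; apply: hG; exists m => //.
    by apply: sc_dil => //; lra.
  move=> [t hrt hp]; apply: (mono t) => //; exact: ltW.
-
  move=> [i [hci [p [[_ hk] he]]]]; exists i; split => //; exists p; split => //.
-
  move=> [i [hci [p [he hk]]]]; split => // Heq.
  have hcip : 0 < (c i)%:R :> R by rewrite ltr0n lt0n.
  have nosc : forall m : 'X_{1..d},
      dotr (nat_vec R (a i)) (exp_vec R m) = r * (c i)%:R ->
      forall t, r < t -> ~ scaled_NP a c t (exp_vec R m).
    move=> m hm t hrt [_ hsc]; have := hsc i; rewrite hm.
    rewrite ler_pM2r //; lra.
  have [m [hm1 hm2]] : exists m : 'X_{1..d}, dilate r (NP R I) (exp_vec R m) /\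
      forall t, r < t -> ~ scaled_NP a c t (exp_vec R m).
    have [r0|hr0] := eqVneq r 0.
      exists 0%MM; split.
        rewrite r0; have [y hy] := NPne; exists y => // j.
        by rewrite /exp_vec mnm0E mul0r.
      apply: (nosc 0%MM); rewrite r0 mul0r /dotr; apply: big1 => j _.
      by rewrite /exp_vec mnm0E mulr0.
    have em : exp_vec R [multinom p j | j < d] = nat_vec R p.
      by apply: functional_extensionality => j; rewrite /exp_vec mnmE.
    exists [multinom p j | j < d]; rewrite em; split.
      apply: sc_dil; first by rewrite lt_neqAle eq_sym hr0.
      split; first by move=> j; exact: nv0.
      move=> k; have [->|/hk //] := eqVneq k i; by rewrite he.
    by rewrite -em; apply: nosc; rewrite em.
  have : real_pow_gt I r 'X_[m].
    by apply/Heq; move=> J0 hJ0 hG; apply: hG; exists m.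
  move=> [t hrt hX].
  pose J := fun q : {mpoly K[d]} =>
    forall u : 'X_{1..d}, (forall j, u j <= m j)%N -> q@_u = 0.
  have : J 'X_[m].
    apply: hX.
      split.
      - by move=> u _; rewrite mcoeff0.
      - by move=> p1 q1 h1 h2 u hu; rewrite mcoeffD h1 // h2 // addr0.
      - move=> p1 q1 h2 u hu; rewrite mcoeffM; apply: big1 => kk /eqP hkk.
        rewrite (h2 kk.2); first by rewrite mulr0.
        move=> j; apply: leq_trans (hu j).
        have := mnmDE j kk.1 kk.2; rewrite -hkk => ->; exact: leq_addl.
    move=> g [b hb ->] u hu; rewrite mcoeffX.
    have [hbu|] := eqVneq b u; last by [].
    exfalso; apply: (hm2 t hrt).
    apply: (up t (fun j => b j) (fun j => m j)).
      by move=> j; rewrite hbu; exact: hu.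
    apply: dil_sc => //; first lra.
  move=> /(_ m (fun j => leqnn _)); rewrite mcoeffX eqxx => /eqP.
  by rewrite oner_eq0.
Qed.
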